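(* Let $n\ge3$ and $A\subseteq[n-1]$ nonempty, let $w=\max A$ and $A'=A\setminus\{w\}$. If $1<w<n-1$, then $$f_n(A)=2f_{n-1}(A)+f_{n-1}(A')-\sum_{j=w-1}^{n-2}f_j(A').$$
   Context: For $m\ge1$ and a set $B$ of positive integers, $f_m(B)$ denotes the number of linear orders $q$ on $[m]$ such that for every triple $i<j<k$ in $[m]$: if $j\in B$ then $i$ is not ranked last among $\{i,j,k\}$ in $q$, and if $j\notin B$ then $k$ is not ranked first among $\{i,j,k\}$ in $q$ (i.e. the size of the set-alternating domain on $[m]$ generated by $B\cap[m]$). *)

(* Defs.v *)
From mathcomp Require Import all_boot all_algebra all_fingroup.
Set Implicit Arguments. Unset Strict Implicit. Unset Printing Implicit Defensive.

(* A linear order q on [m] = {1,...,m} is encoded as a permutation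
   q : {perm 'I_m}; the ordinal x : 'I_m stands for the integer x+1,
   and q x is the rank (position) of x+1 in the order (smaller = earlier). *)

Definition triple_ok (m : nat) (B : pred nat) (q : {perm 'I_m}) (i j k : 'I_m) : bool :=
  if B (val j).+1
  then ~~ ((q j < q i) && (q k < q i))
  else ~~ ((q k < q i) && (q k < q j)).

Definition set_alt_ok (m : nat) (B : pred nat) (q : {perm 'I_m}) : bool :=
  [forall i : 'I_m, forall j : 'I_m, forall k : 'I_m,
     ((i < j) && (j < k)) ==> triple_ok B q i j k].

Definition f (m : nat) (B : pred nat) : nat :=
  #|[set q : {perm 'I_m} | set_alt_ok B q]|.

(* Main.v *)
Require Import Defs.
From mathcomp Require Import all_boot all_algebra all_fingroup zify.
Set Implicit Arguments. Unset Strict Implicit. Unset Printing Implicit Defensive.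


Definition tri (Q : pred nat) (s : seq nat) (i j k : nat) : bool :=
  if Q j then ~~ ((index j s < index i s) && (index k s < index i s))
  else ~~ ((index k s < index i s) && (index k s < index j s)).

Definition ok (Q : pred nat) (s : seq nat) : bool :=
  all (fun i => all (fun j => all (fun k => (i < j < k) ==> tri Q s i j k) s) s) s.

Lemma okP Q s : reflect (forall i j k, i \in s -> j \in s -> k \in s -> i < j < k -> tri Q s i j k) (ok Q s).
Proof.
apply: (iffP allP) => [H i j k iS jS kS ijk | H i iS].
- by move/allP: (H i iS) => /(_ j jS) /allP /(_ k kS) /implyP; apply.
- apply/allP => j jS; apply/allP => k kS; apply/implyP; exact: H.
Qed.

Definition perms M := permutations (iota 0 M).

Lemma permsP M s : reflect (uniq s /\ forall x, (x \in s) = (x < M)) (s \in perms M).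
Proof.
rewrite mem_permutations; apply: (iffP idP).
- move=> pe; split; first by rewrite (perm_uniq pe) iota_uniq.
  by move=> x; rewrite (perm_mem pe) mem_iota.
- case=> us ms; apply: uniq_perm => // [|x]; first exact: iota_uniq.
  by rewrite ms mem_iota.
Qed.

Lemma perms_uniq M : uniq (perms M).
Proof. exact: permutations_uniq. Qed.

Lemma count_bij (T U : eqType) (L1 : seq T) (L2 : seq U) (a : pred T) (b : pred U) (h : T -> U) :
  uniq L1 -> uniq L2 ->
  (forall x y, x \in L1 -> y \in L1 -> a x -> a y -> h x = h y -> x = y) ->
  (forall x, x \in L1 -> a x -> h x \in L2 /\ b (h x)) ->
  (forall y, y \in L2 -> b y -> exists x, [/\ x \in L1, a x & y = h x]) ->
  count a L1 = count b L2.
Proof.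
move=> u1 u2 inj fw bw.
rewrite -!size_filter -(size_map h).
apply: perm_size; apply: uniq_perm.
- rewrite map_inj_in_uniq ?filter_uniq // => x y.
  rewrite !mem_filter => /andP[ax xL] /andP[ay yL]; exact: inj.
- by rewrite filter_uniq.
- move=> y; apply/mapP/idP.
  + case=> x; rewrite mem_filter => /andP[ax xL] ->.
    by have [h1 h2] := fw x xL ax; rewrite mem_filter h1 h2.
  + rewrite mem_filter => /andP[by_ yL].
    have [x [xL ax ->]] := bw y yL by_.
    by exists x; rewrite // mem_filter ax xL.
Qed.

Section Phi.
Variable m : nat.
Definition phi (q : {perm 'I_m}) : seq nat := [seq val ((q^-1)%g r) | r <- enum 'I_m].

Lemma idx_phi q (x : 'I_m) : index (val x) (phi q) = val (q x).
Proof.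
have -> : phi q = map val (map (q^-1)%g (enum 'I_m)) by rewrite -map_comp.
rewrite (index_map val_inj) -{1}(permK q x).
by rewrite (index_map (@perm_inj _ _)) index_enum_ord.
Qed.

Lemma mem_phi q y : (y \in phi q) = (y < m).
Proof.
apply/mapP/idP => [[r _ ->] | ym]; first exact: ltn_ord.
by exists (q (Ordinal ym)); rewrite ?mem_enum // permK.
Qed.

Lemma uniq_phi q : uniq (phi q).
Proof.
rewrite map_inj_uniq ?enum_uniq // => x y /val_inj; exact: perm_inj.
Qed.

Lemma phi_inj : injective phi.
Proof.
move=> q1 q2 e; apply/permP => x; apply: val_inj.
by rewrite -!idx_phi e.
Qed.

Lemma ok_phi (A : pred nat) q : ok (fun x => A x.+1) (phi q) = set_alt_ok A q.
Proof.
apply/okP/forallP => [H i | H i j k].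
- apply/forallP => j; apply/forallP => k; apply/implyP => ijk.
  have := H i j k; rewrite !mem_phi !ltn_ord => /(_ isT isT isT ijk).
  by rewrite /tri /triple_ok !idx_phi.
- rewrite !mem_phi => im jm km ijk.
  move/forallP: (H (Ordinal im)) => /(_ (Ordinal jm)) /forallP /(_ (Ordinal km)) /implyP /(_ ijk).
  by rewrite /tri /triple_ok -!(idx_phi q (Ordinal _)).
Qed.

Lemma phi_surj s : s \in perms m -> exists q, s = phi q.
Proof.
case/permsP => us ms.
have H : forall x : 'I_m, index (val x) s < m.
  move=> x; have sz : size s = m.
    by rewrite -(size_iota 0 m); apply: perm_size; apply: uniq_perm; rewrite ?iota_uniq // => y; rewrite ms mem_iota.
  have : val x \in s by rewrite ms ltn_ord.
  by rewrite -index_mem sz.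
pose g x := Ordinal (H x).
have ginj : injective g.
  move=> x y /(congr1 val) /= e; apply: val_inj.
  by rewrite -(nth_index 0 (_ : val x \in s)) ?e ?nth_index // ms ltn_ord.
exists (perm ginj).
have sz : size s = m.
  by rewrite -(size_iota 0 m); apply: perm_size; apply: uniq_perm; rewrite ?iota_uniq // => x; rewrite ms mem_iota.
apply: (@eq_from_nth _ 0); first by rewrite size_map size_enum_ord sz.
move=> i; rewrite sz => im.
rewrite /phi (nth_map (Ordinal im)) ?size_enum_ord //.
have -> : nth (Ordinal im) (enum 'I_m) i = Ordinal im by apply: val_inj; rewrite /= nth_enum_ord.
set y := ((perm ginj)^-1)%g (Ordinal im).
have : perm ginj y = Ordinal im by rewrite /y permKV.
rewrite permE => /(congr1 val) /= <-.
by rewrite nth_index // ms ltn_ord.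
Qed.

Lemma f_NN (A : pred nat) : f m A = count (ok (fun x => A x.+1)) (perms m).
Proof.
rewrite /f cardsE cardE /enum_mem size_filter (@eq_count _ _ (set_alt_ok A)); last first.
  by move=> x; rewrite inE.
apply: (count_bij (h:=phi)).
- by rewrite -enumT enum_uniq.
- exact: perms_uniq.
- by move=> x y _ _ _ _; apply: phi_inj.
- move=> q _; rewrite /= -ok_phi => ->; split=> //.
  by apply/permsP; split; [exact: uniq_phi | exact: mem_phi].
- move=> s sp oks; have [q eq] := phi_surj sp.
  by exists q; split => //; [by rewrite -enumT mem_enum | rewrite -ok_phi -eq].
Qed.
End Phi.


Lemma idx_lt (x : nat) s : x \in s -> index x s < size s.
Proof. by rewrite index_mem. Qed.

Lemma idx_inj (x y : nat) s : x \in s -> y \in s -> index x s = index y s -> x = y.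
Proof. by move=> xs ys e; rewrite -(nth_index 0 xs) e nth_index. Qed.

Lemma idx_neq (x y : nat) s : x \in s -> y \in s -> x < y -> index x s != index y s.
Proof.
move=> xs ys xy; apply/negP => /eqP /(idx_inj xs ys) e; by rewrite e ltnn in xy.
Qed.

Lemma idx_rcons (x : nat) s l : x \in s -> index x (rcons s l) = index x s.
Proof. by move=> xs; rewrite -cats1 index_cat xs. Qed.

Lemma idx_rcons_l s (l : nat) : l \notin s -> index l (rcons s l) = size s.
Proof. by move=> ls; rewrite -cats1 index_cat (negbTE ls) /= eqxx addn0. Qed.

Lemma eq_ok Q1 Q2 s : Q1 =1 Q2 -> ok Q1 s = ok Q2 s.
Proof. by move=> e; rewrite /ok /tri; apply: eq_all => i; apply: eq_all => j; rewrite e. Qed.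

Lemma ok_catl Q t v : ok Q (t ++ v) -> ok Q t.
Proof.
move/okP=> H; apply/okP => i j k it jt kt ijk.
have := H i j k; rewrite !mem_cat it jt kt => /(_ isT isT isT ijk).
by rewrite /tri !index_cat it jt kt.
Qed.

Lemma ok_rcons_inv Q s l : l \notin s -> ok Q (rcons s l) ->
  [/\ ok Q s,
      (forall j k, j \in s -> k \in s -> l < j < k -> ~~ Q j && (index j s < index k s)) &
      (~~ Q l -> forall i k, i \in s -> k \in s -> i < l < k -> index i s < index k s)].
Proof.
move=> ls oks; split.
- by move: oks; rewrite -cats1; apply: ok_catl.
- move=> j k js ks ljk.
  move/okP: oks => /(_ l j k); rewrite !mem_rcons !in_cons eqxx js ks !orbT => /(_ isT isT isT ljk).
  rewrite /tri idx_rcons_l // !idx_rcons //.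
  have := idx_lt js; have := idx_lt ks.
  have : j < k by case/andP: ljk.
  move=> /(idx_neq js ks).
  case: (Q j) => /=; lia.
- move=> nQl i k iS kS ilk.
  move/okP: oks => /(_ i l k); rewrite !mem_rcons !in_cons eqxx iS kS !orbT => /(_ isT isT isT ilk).
  rewrite /tri (negbTE nQl) idx_rcons_l // !idx_rcons //.
  have := idx_lt iS; have := idx_lt kS.
  have : i < k by case/andP: ilk => a b; apply: ltn_trans a b.
  move=> /(idx_neq iS kS).
  lia.
Qed.

Lemma ok_rcons Q s l : l \notin s -> ok Q s ->
  (forall j k, j \in s -> k \in s -> l < j < k -> ~~ Q j && (index j s < index k s)) ->
  (~~ Q l -> forall i k, i \in s -> k \in s -> i < l < k -> index i s < index k s) ->
  ok Q (rcons s l).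
Proof.
move=> ls /okP oks H2 H3; apply/okP => i j k.
rewrite !mem_rcons !in_cons.
case/orP => [/eqP -> | iS]; case/orP => [/eqP -> | jS]; case/orP => [/eqP -> | kS] //; try lia.
- move=> ljk; have := H2 j k jS kS ljk.
  rewrite /tri idx_rcons_l // !idx_rcons //; case: (Q j) => /=; lia.
- move=> ilk; rewrite /tri idx_rcons_l // !idx_rcons //.
  case: (boolP (Q l)) => qL.
  + have := idx_lt iS; lia.
  + have := H3 qL i k iS kS ilk; lia.
- move=> ijl; rewrite /tri idx_rcons_l // !idx_rcons //.
  have := idx_lt iS; case: (Q j) => /=; lia.
- move=> ijk; have := oks i j k iS jS kS ijk.
  by rewrite /tri !idx_rcons.
Qed.


Lemma pw_idx (r : rel nat) s : uniq s ->
  (forall x y, x \in s -> y \in s -> index x s < index y s -> r x y) -> pairwise r s.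
Proof.
elim: s => [//|z s IH] /= /andP[zs us] H; apply/andP; split.
- apply/allP => y ys; apply: H; rewrite ?in_cons ?eqxx ?ys ?orbT //=.
  have zy : z != y by apply: contraNneq zs => ->.
  by rewrite (negbTE zy).
- apply: IH => // x y xs ys lt; apply: H; rewrite ?in_cons ?xs ?ys ?orbT //=.
  have zx : z != x by apply: contraNneq zs => ->.
  have zy : z != y by apply: contraNneq zs => ->.
  by rewrite (negbTE zx) (negbTE zy) ltnS.
Qed.

Lemma filter_none (a : pred nat) s : (forall x, x \in s -> ~~ a x) -> filter a s = [::].
Proof.
move=> H; rewrite (eq_in_filter (a2 := pred0)) ?filter_pred0 // => x /H.
by move/negbTE.
Qed.

Lemma filter_all' (a : pred nat) s : (forall x, x \in s -> a x) -> filter a s = s.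
Proof. by move=> H; apply/all_filterP/allP. Qed.

Lemma split_pw (l : nat) s : l \notin s ->
  pairwise (fun x y => (x < l) || (x < y)) s ->
  s = filter (fun x => x < l) s ++ filter (fun x => l < x) s /\
  pairwise ltn (filter (fun x => l < x) s).
Proof.
elim: s => [//|z s IH]; rewrite in_cons negb_or pairwise_cons => /andP[zl ls] /andP[az pws].
have [e pw] := IH ls pws.
case: (ltnP z l) => zL /=.
- rewrite zL ltnNge (ltnW zL) /=; split=> //; congr (_ :: _); exact: e.
- have lz : l < z by move: zl zL; lia.
  have big : forall y, y \in s -> z < y.
    by move=> y ys; move/allP: az => /(_ y ys); rewrite ltnNge zL.
  rewrite ltnNge zL lz /= (filter_none (a := fun x => x < l)); last first.
    by move=> y /big zy; rewrite -leqNgt; apply: ltnW (leq_ltn_trans zL zy).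
  rewrite filter_all'; last by move=> y /big zy; apply: ltn_trans lz zy.
  split=> //; apply/andP; split.
  + by apply/allP => y /big.
  + move: pw; rewrite filter_all' // => y /big zy; apply: ltn_trans lz zy.
Qed.

Lemma idx_iota a n x : a <= x < a + n -> index x (iota a n) = x - a.
Proof.
move=> H.
have -> : x = nth 0 (iota a n) (x - a) by rewrite nth_iota; lia.
rewrite index_uniq ?iota_uniq ?size_iota //; first by rewrite nth_iota; lia.
lia.
Qed.

Lemma perms_size M s : s \in perms M -> size s = M.
Proof.
case/permsP => us ms; rewrite -(size_iota 0 M); apply: perm_size; apply: uniq_perm.
- exact: us.
- exact: iota_uniq.
- by move=> x; rewrite ms mem_iota.
Qed.

Lemma ok_cat_up (Q : pred nat) (t : seq nat) (l M : nat) : (forall x, Q x -> x < l) -> (forall x, x \in t -> x < l) ->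
  ok Q t -> ok Q (t ++ iota l.+1 (M - l.+1)).
Proof.
move=> Ql tl /okP okt; apply/okP => i j k.
rewrite !mem_cat !mem_iota.
have idt : forall x, x \in t -> index x (t ++ iota l.+1 (M - l.+1)) = index x t.
  by move=> x xt; rewrite index_cat xt.
have idu : forall x, l.+1 <= x < l.+1 + (M - l.+1) -> index x (t ++ iota l.+1 (M - l.+1)) = size t + (x - l.+1).
  move=> x xu; rewrite index_cat idx_iota //.
  by case: ifP => // /tl; lia.
case/orP => [iS | iu]; case/orP => [jS | ju]; case/orP => [kS | ku] ijk.
- by have := okt i j k iS jS kS ijk; rewrite /tri !idt.
- rewrite /tri (idt i iS) (idt j jS) (idu k ku); move: (idx_lt iS) (idx_lt jS).
  set st := size t; case: (Q j); lia.
- have := tl _ kS; lia.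
- rewrite /tri (idt i iS) (idu j ju) (idu k ku); move: (idx_lt iS) (Ql j).
  set st := size t; case: (Q j); lia.
- have := tl _ jS; lia.
- have := tl _ jS; lia.
- have := tl _ kS; lia.
- rewrite /tri (idu i iu) (idu j ju) (idu k ku); have := Ql j; case: (Q j); lia.
Qed.


Lemma count_last_gen (Q : pred nat) (R : pred (seq nat)) M l :
  (forall x, Q x -> x < l) -> l < M ->
  count (fun s => (ok Q s && R s) && (last 0 s == l)) (perms M) =
  count (fun t => ok Q t && R (t ++ iota l.+1 (M - l.+1) ++ [:: l])) (perms l).
Proof.
move=> Ql lM; symmetry.
set u := iota l.+1 (M - l.+1).
apply: (count_bij (h := fun t => t ++ u ++ [:: l])).
- exact: perms_uniq.
- exact: perms_uniq.
- move=> x y xp yp _ _ /eqP; rewrite eqseq_cat ?(perms_size xp) ?(perms_size yp) //.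
  by case/andP => /eqP.
- move=> t tp /andP[okt Rt].
  case/permsP: tp => ut mt.
  have tl : forall x, x \in t -> x < l by move=> x; rewrite mt.
  have e : t ++ u ++ [:: l] = rcons (t ++ u) l by rewrite -cats1 catA.
  have lnot : l \notin t ++ u by rewrite mem_cat mt mem_iota ltnn /=; lia.
  split.
  + apply/permsP; split.
    * rewrite e rcons_uniq lnot cat_uniq ut iota_uniq /= andbT.
      by apply/hasPn => x; rewrite mem_iota => xu; rewrite mt; lia.
    * move=> x; rewrite e mem_rcons in_cons mem_cat mt mem_iota.
      by apply/idP/idP; lia.
  + rewrite /= Rt andbT e last_rcons eqxx andbT; apply: ok_rcons => //.
    * exact: ok_cat_up.
    * move=> j k; rewrite !mem_cat => jm km ljk.
      have jt : j \notin t by apply/negP => /tl; lia.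
      have kt : k \notin t by apply/negP => /tl; lia.
      rewrite (negbTE jt) (negbTE kt) /= in jm km.
      move: jm km; rewrite !mem_iota => jm km.
      rewrite !index_cat (negbTE jt) (negbTE kt) !idx_iota // ?mem_iota //.
      apply/andP; split; first by apply/negP => /Ql; lia.
      lia.
    * move=> _ i k; rewrite !mem_cat => im km ilk.
      have kt : k \notin t by apply/negP => /tl; lia.
      rewrite (negbTE kt) /= in km.
      have it : i \in t.
        case/orP: im => // iu; move: iu; rewrite mem_iota; lia.
      rewrite !index_cat it (negbTE kt).
      move: (idx_lt it); set st := size t; lia.
- move=> s sp /= /andP[/andP[oks Rs] /eqP ls].
  have sz := perms_size sp.
  case/lastP: s sp oks Rs ls sz => [|s' z] sp oks Rs ls sz.
    by rewrite /= in sz; lia.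
  rewrite last_rcons in ls; subst z.
  case/permsP: sp => us ms; rewrite rcons_uniq in us; case/andP: us => ls' us'.
  have [ok' c2 c3] := ok_rcons_inv ls' oks.
  have nQl : ~~ Q l by apply/negP => /Ql; rewrite ltnn.
  have ms' : forall x, (x \in s') = (x < M) && (x != l).
    move=> x; have := ms x; rewrite mem_rcons in_cons.
    case: (eqVneq x l) => [-> _|xl] /=; last by rewrite andbT.
    by rewrite (negbTE ls') andbF.
  have pw : pairwise (fun x y => (x < l) || (x < y)) s'.
    apply: pw_idx => // x y xs ys lt.
    case: (ltnP x l) => //= xl.
    have xl' : l < x by move: (ms' x); rewrite xs; lia.
    case: (ltngtP x y) => // [yx|exy]; last by rewrite exy ltnn in lt.
    case: (ltngtP y l) => [yl | ly | yl].
    + by have := c3 nQl y x ys xs; rewrite yl xl' => /(_ isT); lia.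
    + have := c2 y x ys xs; rewrite ly yx => /(_ isT) /andP[_]; lia.
    + by move: ys; rewrite yl (negbTE ls').
  have [e pwu] := split_pw ls' pw.
  set t := filter (fun x => x < l) s' in e.
  have fu : filter (fun x => l < x) s' = u.
    apply: (pairwise_eq (r:=ltn)) => //.
    + by move=> x y /andP[a b]; lia.
    + by rewrite -sorted_pairwise ?iota_ltn_sorted //; apply: ltn_trans.
    + apply: uniq_perm; rewrite ?filter_uniq ?iota_uniq // => x.
      rewrite mem_filter mem_iota ms'; apply/idP/idP; lia.
  have es : rcons s' l = t ++ u ++ [:: l] by rewrite -cats1 {1}e fu catA.
  exists t; split.
  + apply/permsP; split; first by rewrite filter_uniq.
    by move=> x; rewrite mem_filter ms'; apply/idP/idP; lia.
  + rewrite -es Rs andbT; apply: (ok_catl (v := u ++ [:: l])); rewrite -es //.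
  + exact: es.
Qed.


Definition incr (W : nat) (s : seq nat) :=
  all (fun x => all (fun y => (W <= x < y) ==> (index x s < index y s)) s) s.

Lemma incrP W s : reflect (forall x y, x \in s -> y \in s -> W <= x < y -> index x s < index y s) (incr W s).
Proof.
apply: (iffP allP) => [H x y xs ys h | H x xs].
- by move/allP: (H x xs) => /(_ y ys) /implyP; apply.
- apply/allP => y ys; apply/implyP; exact: H.
Qed.

Lemma ok_map Q (g : nat -> nat) t : (forall x y, x < y -> g x < g y) ->
  ok Q (map g t) = ok (fun x => Q (g x)) t.
Proof.
move=> mono.
have mono' : forall x y, (g x < g y) = (x < y).
  move=> x y; case: (ltngtP x y) => [h|h|->]; first by rewrite mono.
  + by rewrite ltnNge ltnW // mono.
  + by rewrite ltnn.
have ginj : injective g.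
  move=> x y e; case: (ltngtP x y) => h //.
  + by have := mono' x y; rewrite e ltnn h.
  + by have := mono' y x; rewrite e ltnn h.
apply/okP/okP => H.
- move=> i j k iS jS kS ijk; have := H (g i) (g j) (g k).
  rewrite !(mem_map ginj) iS jS kS !mono' => /(_ isT isT isT ijk).
  by rewrite /tri !(index_map ginj).
- move=> i j k /mapP[i0 i0s ->] /mapP[j0 j0s ->] /mapP[k0 k0s ->]; rewrite !mono' => ijk.
  have := H i0 j0 k0 i0s j0s k0s ijk.
  by rewrite /tri !(index_map ginj).
Qed.

Lemma count_last_W (P P' : pred nat) W m : P W -> (forall x, P x -> x <= W) ->
  (forall x, P' x = P x && (x != W)) -> W.+1 < m ->
  count (fun s => ok P s && (last 0 s == W)) (perms m) =
  count (fun t => ok P' t && incr W t) (perms m.-1).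
Proof.
move=> PW Pl P'E Wm; symmetry.
pose g x := if x < W then x else x.+1.
pose gi x := if x < W then x else x.-1.
have mono : forall x y, x < y -> g x < g y by move=> x y; rewrite /g; case: ifP; case: ifP; lia.
have gP : forall x, P (g x) = P' x.
  move=> x; rewrite P'E /g; case: (ltnP x W) => xW.
  + have xW' : x != W by lia.
    by rewrite xW' andbT.
  + case: (boolP (P x.+1)) => h; first by have := Pl _ h; lia.
    case: (boolP (P x)) => h' //=; have := Pl _ h'; lia.
have gW : forall x, g x != W by move=> x; rewrite /g; case: ifP; lia.
have ggi : forall x, x != W -> g (gi x) = x by move=> x; rewrite /g /gi; case: ifP; case: ifP; lia.
have gig : forall x, gi (g x) = x by move=> x; rewrite /g /gi; case: ifP; case: ifP; lia.
have ginj : injective g := can_inj gig.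
apply: (count_bij (h := fun t => rcons (map g t) W)).
- exact: perms_uniq.
- exact: perms_uniq.
- by move=> x y _ _ _ _ e; apply: (inj_map ginj); apply: (rcons_injl W).
- move=> t tp /andP[okt it]; case/permsP: tp => ut mt.
  have Wn : W \notin map g t.
    by apply/mapP => -[x _ e]; move: (gW x); rewrite -e eqxx.
  split.
  + apply/permsP; split.
    * by rewrite rcons_uniq Wn map_inj_uniq.
    * move=> x; rewrite mem_rcons in_cons; case: (eqVneq x W) => [-> | xW] /=; first by lia.
      apply/mapP/idP => [[y ys ->] | xm].
      - by move: (mt y); rewrite ys /g; case: ifP; lia.
      - exists (gi x); last by rewrite ggi.
        by rewrite mt /gi; case: ifP; lia.
  + rewrite /= last_rcons eqxx andbT; apply: ok_rcons => //.
    * by rewrite ok_map // (eq_ok _ gP).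
    * move=> j k /mapP[j0 j0s ->] /mapP[k0 k0s ->] Wjk.
      apply/andP; split; first by apply/negP => /Pl; lia.
      rewrite !(index_map ginj); move/incrP: it; apply => //.
      by move: Wjk; rewrite /g; case: ifP; case: ifP; lia.
    * by rewrite PW.
- move=> s sp /= /andP[oks /eqP ls].
  have sz := perms_size sp.
  case/lastP: s sp oks ls sz => [|s' z] sp oks ls sz.
    by rewrite /= in sz; lia.
  rewrite last_rcons in ls; subst z.
  case/permsP: sp => us ms; rewrite rcons_uniq in us; case/andP: us => ls' us'.
  have [ok' c2 _] := ok_rcons_inv ls' oks.
  have ms' : forall x, (x \in s') = (x < m) && (x != W).
    move=> x; have := ms x; rewrite mem_rcons in_cons.
    case: (eqVneq x W) => [-> _|xl] /=; last by rewrite andbT.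
    by rewrite (negbTE ls') andbF.
  have es' : map g (map gi s') = s'.
    rewrite -map_comp; apply: map_id_in => x xs /=; apply: ggi.
    by move: (ms' x); rewrite xs => /esym /andP[].
  exists (map gi s'); split.
  + apply/permsP; split.
    * rewrite map_inj_in_uniq // => x y xs ys e.
      rewrite -(ggi x) ?e ?ggi //.
      - by move: (ms' y); rewrite ys => /esym /andP[].
      - by move: (ms' x); rewrite xs => /esym /andP[].
    * move=> x; apply/mapP/idP => [[y ys ->] | xm].
      - by move: (ms' y); rewrite ys /gi; case: ifP; lia.
      - exists (g x); last by rewrite gig.
        by rewrite ms' /g; case: ifP; lia.
  + rewrite -(eq_ok _ gP) -ok_map // es' ok' /=.
    apply/incrP => x y xs ys Wxy.
    have gxs : g x \in s' by rewrite -es' (mem_map ginj).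
    have gys : g y \in s' by rewrite -es' (mem_map ginj).
    have := c2 _ _ gxs gys.
    rewrite -[in index (g x) _]es' -[in index (g y) _]es' !(index_map ginj).
    move=> H.
    have wg : W < g x < g y by move: Wxy; rewrite /g; case: ifP; case: ifP; lia.
    by case/andP: (H wg).
  + by rewrite es'.
Qed.


Lemma count_last_lt (P : pred nat) W m l : P W -> W.+1 < m -> l < W ->
  count (fun s => ok P s && (last 0 s == l)) (perms m) = 0.
Proof.
move=> PW Wm lW; apply/eqP; rewrite -leqn0 leqNgt -has_count; apply/hasPn => s sp.
apply/negP => /andP[oks /eqP ls].
have sz := perms_size sp.
case/lastP: s sp oks ls sz => [|s' z] sp oks ls sz; first by rewrite /= in sz; lia.
rewrite last_rcons in ls; subst z.
case/permsP: sp => us ms; rewrite rcons_uniq in us; case/andP: us => ls' us'.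
have [_ c2 _] := ok_rcons_inv ls' oks.
have inS : forall x, x < m -> x != l -> x \in s'.
  by move=> x xm xl; move: (ms x); rewrite mem_rcons in_cons (negbTE xl) xm.
have := c2 W m.-1 (inS _ _ _) (inS _ _ _); rewrite PW /=.
have -> : l < W < m.-1 by lia.
move=> /(_ _ _ _ _ isT) //; try lia.
Qed.

Lemma incr_last_lt Q W M s : s \in perms M -> ok Q s -> last 0 s < W -> incr W s.
Proof.
move=> sp oks lW.
case/lastP: s sp oks lW => [|s' l] sp oks lW; first by [].
rewrite last_rcons in lW.
case/permsP: sp => us ms; rewrite rcons_uniq in us; case/andP: us => ls' us'.
have [_ c2 _] := ok_rcons_inv ls' oks.
apply/incrP => x y; rewrite !mem_rcons !in_cons.
case/orP => [/eqP -> | xs]; first by lia.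
case/orP => [/eqP -> | ys]; first by lia.
move=> Wxy; rewrite !idx_rcons //.
have := c2 x y xs ys; have -> : l < x < y by lia.
by move=> /(_ isT) /andP[].
Qed.

Lemma incr_top W t l : (forall x, x \in t -> x < l) -> incr W (rcons t l) = incr W t.
Proof.
move=> tl.
have lt : l \notin t by apply/negP => /tl; rewrite ltnn.
apply/incrP/incrP => H.
- move=> x y xs ys Wxy; have := H x y; rewrite !mem_rcons !in_cons xs ys !orbT.
  by rewrite !idx_rcons // => /(_ isT isT Wxy).
- move=> x y; rewrite !mem_rcons !in_cons.
  case/orP => [/eqP -> | xs]; case/orP => [/eqP -> | ys] Wxy; try lia.
  + by have := tl _ ys; lia.
  + rewrite idx_rcons // idx_rcons_l //; move: (idx_lt xs); set st := size t; lia.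
  + by rewrite !idx_rcons //; apply: H.
Qed.

Lemma incr_mid W t l M : (forall x, x \in t -> x < l) -> W <= l -> l.+1 < M ->
  incr W (t ++ iota l.+1 (M - l.+1) ++ [:: l]) = false.
Proof.
move=> tl Wl lM; apply/negP => /incrP /(_ l l.+1).
have lt : l \notin t by apply/negP => /tl; rewrite ltnn.
have l1t : l.+1 \notin t by apply/negP => /tl; lia.
have lu : l \notin iota l.+1 (M - l.+1) by rewrite mem_iota; lia.
have l1u : l.+1 \in iota l.+1 (M - l.+1) by rewrite mem_iota; lia.
rewrite !mem_cat l1u (negbTE lu) (negbTE lt) (negbTE l1t) in_cons eqxx /= ?orbT.
rewrite !index_cat (negbTE lt) (negbTE l1t) (negbTE lu) l1u /= eqxx idx_iota; last by lia.
rewrite size_iota; set st := size t; move=> /(_ isT isT); lia.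
Qed.

Lemma sum_last (a : pred (seq nat)) M L : (forall s, s \in L -> last 0 s < M) ->
  count a L = \sum_(0 <= l < M) count (fun s => a s && (last 0 s == l)) L.
Proof.
elim: L => [|x L IH] H; first by rewrite big1.
rewrite /= big_split /= -IH; last by move=> s sL; apply: H; rewrite in_cons sL orbT.
congr (_ + _).
have xM : last 0 x \in index_iota 0 M by rewrite mem_index_iota; apply: H; rewrite in_cons eqxx.
rewrite (bigD1_seq (last 0 x)) //=; last by rewrite /index_iota iota_uniq.
rewrite eqxx andbT big1 ?addn0 // => l /negbTE.
by rewrite eq_sym => ->; rewrite andbF.
Qed.

Lemma count_split_last (a : pred (seq nat)) M : 0 < M ->
  count a (perms M) = \sum_(0 <= l < M) count (fun s => a s && (last 0 s == l)) (perms M).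
Proof.
move=> M0; apply: sum_last => s /permsP [_ ms].
have := mem_last 0 s; rewrite in_cons => /orP[/eqP -> // | ]. 
by rewrite ms.
Qed.


Definition NN (Q : pred nat) M := count (ok Q) (perms M).
Definition II (Q : pred nat) W M := count (fun t => ok Q t && incr W t) (perms M).

Lemma F1 (P P' : pred nat) W m : P W -> (forall x, P x -> x <= W) ->
  (forall x, P' x = P x && (x != W)) -> W.+1 < m ->
  NN P m = II P' W m.-1 + \sum_(W.+1 <= l < m) NN P l.
Proof.
move=> PW Pl P'E Wm.
rewrite /NN (count_split_last _ (_ : 0 < m)); last by lia.
rewrite (@big_cat_nat _ _ _ W) //=; last by lia.
rewrite big1_seq /=; last first.
  move=> l; rewrite mem_index_iota => /andP[_ lW]; exact: (count_last_lt (W:=W)).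
rewrite add0n big_ltn; last by lia.
rewrite (count_last_W PW Pl P'E Wm); congr (_ + _).
apply: eq_big_nat => l Hl.
have -> : count (fun s => ok P s && (last 0 s == l)) (perms m) =
          count (fun s => (ok P s && (fun _ => true) s) && (last 0 s == l)) (perms m).
  by apply: eq_count => s; rewrite andbT.
rewrite count_last_gen; [ | move=> x /Pl; lia | lia].
by apply: eq_count => t; rewrite andbT.
Qed.

Lemma F2 (P' : pred nat) W M : (forall x, P' x -> x < W) -> W <= M ->
  II P' W M.+1 + \sum_(W <= l < M.+1) NN P' l = II P' W M + NN P' M.+1.
Proof.
move=> P'l WM.
set c := fun l => count (fun s => ok P' s && (last 0 s == l)) (perms M.+1).
have hN : NN P' M.+1 = \sum_(0 <= l < W) c l + \sum_(W <= l < M.+1) NN P' l.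
  rewrite /NN (count_split_last _ (_ : 0 < M.+1)) // (@big_cat_nat _ _ _ W) //=; last by lia.
  congr (_ + _); apply: eq_big_nat => l Hl.
  have -> : count (fun s => ok P' s && (last 0 s == l)) (perms M.+1) =
            count (fun s => (ok P' s && (fun _ => true) s) && (last 0 s == l)) (perms M.+1).
    by apply: eq_count => s; rewrite andbT.
  rewrite count_last_gen; [ | move=> x /P'l; lia | lia].
  by apply: eq_count => t; rewrite andbT.
have hI : II P' W M.+1 = \sum_(0 <= l < W) c l + II P' W M.
  rewrite /II (count_split_last _ (_ : 0 < M.+1)) // (@big_cat_nat _ _ _ W) //=; last by lia.
  congr (_ + _).
  - apply: eq_big_nat => l Hl; rewrite /c; apply: eq_in_count => s sp /=.
    case: (boolP (ok P' s)) => //= oks; case: (eqVneq (last 0 s) l) => [e|]; last by rewrite andbF.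
    by rewrite (incr_last_lt sp oks) // e; case/andP: Hl.
  - rewrite big_nat_recr //= big1_seq ?add0n /=.
    + rewrite count_last_gen; [ | move=> x /P'l; lia | lia].
      rewrite subnn /=; apply: eq_in_count => t tp /=.
      rewrite cats1 incr_top // => x; case/permsP: tp => _ ->; by [].
    + move=> l; rewrite mem_index_iota => /andP[Wl Hl].
      rewrite count_last_gen; [ | move=> x /P'l; lia | lia].
      apply/eqP; rewrite -leqn0 leqNgt -has_count; apply/hasPn => t tp.
      have tl : forall x, x \in t -> x < l by move=> x; case/permsP: tp => _ ->.
      by rewrite (incr_mid tl Wl) ?andbF //; lia.
rewrite hN hI; lia.
Qed.

Unset Implicit Arguments.
Import GRing.Theory.
Local Open Scope ring_scope.

Theorem proposition5 (n : nat) (A : pred nat) (w : nat) :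
  (3 <= n)%N ->
  (forall x, A x -> (1 <= x <= n.-1)%N) ->
  A w ->
  (forall x, A x -> (x <= w)%N) ->
  (1 < w < n.-1)%N ->
  ((f n A)%:Z =
     2 * (f n.-1 A)%:Z + (f n.-1 (predD1 A w))%:Z
     - \sum_(w.-1 <= j < n.-1) (f j (predD1 A w))%:Z).
Proof.
case: n => [|[|[|k]]] //= _ _ Aw Amax wn.
set W := w.-1.
have wE : w = W.+1 by rewrite /W; lia.
set P := fun x => A x.+1.
set P' := fun x => predD1 A w x.+1.
have PW : P W by rewrite /P -wE.
have Pl : forall x, P x -> (x <= W)%N by move=> x /Amax; lia.
have P'E : forall x, P' x = P x && (x != W).
  by move=> x; rewrite /P' /P /= wE eqSS andbC.
have fA : forall m, f m A = NN P m by move=> m; rewrite f_NN.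
have fA' : forall m, f m (predD1 A w) = NN P' m by move=> m; rewrite f_NN.
have P'l : forall x, P' x -> (x < W)%N.
  by move=> x; rewrite P'E => /andP[/Pl h1 h2]; lia.
have e1 := F1 PW Pl P'E (ltac:(lia) : (W.+1 < k.+3)%N).
have e2 := F1 PW Pl P'E (ltac:(lia) : (W.+1 < k.+2)%N).
have e3 := F2 P'l (ltac:(lia) : (W <= k.+1)%N).
have sumE : \sum_(w.-1 <= j < k.+2) (f j (predD1 A w))%:Z = (\sum_(W <= j < k.+2) NN P' j)%N%:Z.
  rewrite (big_morph Posz PoszD (erefl (Posz 0))).
  by apply: eq_bigr => j _; rewrite fA'.
rewrite sumE !fA !fA'.
rewrite big_nat_recr /= in e1; last by lia.
rewrite /= in e1 e2.
lia.
Qed.
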